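(* Let $\langle A, \leq, \otimes, \ominus, \mathbf{1}\rangle$ be a residuated partially ordered monoid with bottom element $\bot$, let $k\geq1$ and $a = a_1\ldots a_k$, $b = b_1\ldots b_k \in Lex_k(A)$. If $\delta(a,b) < \gamma(a,b)$, then the residuation $a \ominus_k b$ of $a$ by $b$ in $\langle Lex_k(A), \leq_k, \otimes^k, \mathbf{1}^k\rangle$ exists and equals $$(a_1 \ominus b_1) \ldots (a_{\delta(a,b)} \ominus b_{\delta(a,b)})\,\Big(\bigvee Lex_{k-\delta(a,b)}(A)\Big),$$ that is, this tuple $r$ lies in $Lex_k(A)$ and for every $c \in Lex_k(A)$, $b \otimes^k c \leq_k a$ iff $c \leq_k r$.
   Context: A residuated partially ordered monoid $\langle A, \leq, \otimes, \ominus, \mathbf{1}\rangle$ consists of a partial order $\langle A,\leq\rangle$, a commutative monoid $\langle A,\otimes,\mathbf{1}\rangle$, and a binary operation $\ominus$ with $b \otimes c \leq a$ iff $c \leq a \ominus b$ for all $a,b,c\in A$. $a<b$ means $a\leq b$, $a\neq b$. $I(A) = \{c \in A \mid \forall a,b \in A.\ a \otimes c = b \otimes c \Rightarrow a = b\}$, $C(A)=A\setminus I(A)$. $Lex_k(A)\subseteq A^k$: $Lex_1(A) = A$, $Lex_{k+1}(A) = I(A)\, Lex_k(A) \cup C(A)\{\bot\}^k$ (concatenations of sequences; $\{\bot\}^k$ the singleton of $k$ copies of $\bot$). The order $\leq_k$: $\leq_1=\leq$, and for $k\geq2$, $a_1 \ldots a_k \leq_k b_1 \ldots b_k$ iff $a_1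 < b_1$, or $a_1 = b_1$ and $a_2 \ldots a_k \leq_{k-1} b_2 \ldots b_k$. $\otimes^k$ is componentwise, $\mathbf{1}^k=\mathbf{1}\ldots\mathbf{1}$. $\bigvee Lex_n(A)$ denotes the greatest element of $Lex_n(A)$ with respect to $\leq_n$ (the empty sequence when $n=0$). For $a,b\in Lex_k(A)$: $\gamma(a,b) = \min\{ i \mid a_i \ominus b_i \in C(A)\}$ and $\delta(a,b) = \min\{ i \mid (a_i \ominus b_i) \otimes b_i < a_i\}$, each equal to $k+1$ if the set is empty. *)

(* Defs.v *)
From Stdlib Require Import List Arith.
Import ListNotations.

Section RPOM.
Variables (A : Type) (le : A -> A -> Prop) (mul res : A -> A -> A) (one : A).

Definition lt (a b : A) : Prop := le a b /\ a <> b.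

(* residuated partially ordered (commutative) monoid; res a b = a (-) b *)
Definition residuated_pomonoid : Prop :=
  (forall a, le a a) /\
  (forall a b, le a b -> le b a -> a = b) /\
  (forall a b c, le a b -> le b c -> le a c) /\
  (forall a b c, mul a (mul b c) = mul (mul a b) c) /\
  (forall a b, mul a b = mul b a) /\
  (forall a, mul one a = a) /\
  (forall a b c, le (mul b c) a <-> le c (res a b)).

Definition is_bottom (bot : A) : Prop := forall a, le bot a.

Definition inI (c : A) : Prop := forall a b, mul a c = mul b c -> a = b.
Definition inC (c : A) : Prop := ~ inI c.

Variable bot : A.

(* Lex_n(A) as a predicate on sequences; Lex_0 = {empty sequence},
   so that Lex_1 = A and Lex_(n+1) = I(A) Lex_n  \cup  C(A) {bot}^n *)
Fixpoint Lex (n : nat) (s : list A) : Prop :=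
  match n with
  | 0 => s = []
  | S m => exists x t, s = x :: t /\
             ((inI x /\ Lex m t) \/ (inC x /\ t = repeat bot m))
  end.

Fixpoint lexle (s t : list A) : Prop :=
  match s, t with
  | [], [] => True
  | [x], [y] => le x y
  | x :: s', y :: t' => lt x y \/ (x = y /\ lexle s' t')
  | _, _ => False
  end.

Fixpoint zipw (f : A -> A -> A) (s t : list A) : list A :=
  match s, t with
  | x :: s', y :: t' => f x y :: zipw f s' t'
  | _, _ => []
  end.

Definition mulk (s t : list A) : list A := zipw mul s t.

Definition is_greatest_Lex (n : nat) (g : list A) : Prop :=
  Lex n g /\ forall s, Lex n s -> lexle s g.

(* i = min { i in 1..k | P a_i b_i }, or k+1 if no such i  (1-based) *)
Definition is_first_index (P : A -> A -> Prop) (k : nat) (a b : list A)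
  (i : nat) : Prop :=
  1 <= i <= S k /\
  (forall j, 1 <= j < i -> ~ P (nth (j - 1) a bot) (nth (j - 1) b bot)) /\
  (i <= k -> P (nth (i - 1) a bot) (nth (i - 1) b bot)).

Definition is_gamma (k : nat) (a b : list A) (i : nat) : Prop :=
  is_first_index (fun x y => inC (res x y)) k a b i.
Definition is_delta (k : nat) (a b : list A) (i : nat) : Prop :=
  is_first_index (fun x y => lt (mul (res x y) y) x) k a b i.

End RPOM.

Arguments lt {A}. Arguments residuated_pomonoid {A}. Arguments is_bottom {A}.
Arguments inI {A}. Arguments inC {A}. Arguments Lex {A}. Arguments lexle {A}.
Arguments zipw {A}. Arguments mulk {A}. Arguments is_greatest_Lex {A}.
Arguments is_first_index {A}. Arguments is_gamma {A}. Arguments is_delta {A}.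

(* Main.v *)
Require Import Defs.
From Stdlib Require Import List Arith Lia Classical.
Import ListNotations.

Lemma lexle_cons (A : Type) (le : A -> A -> Prop) x y s t :
  s <> [] -> lexle le (x::s) (y::t) <-> lt le x y \/ (x = y /\ lexle le s t).
Proof. intros H. destruct s as [|z s]; [congruence|]. simpl. tauto. Qed.

Lemma Lex_len (A : Type) (mul : A -> A -> A) bot n s :
  Lex mul bot n s -> length s = n.
Proof.
  revert s; induction n; simpl; intros s H.
  - subst; reflexivity.
  - destruct H as [x [t [-> [[_ H]|[_ ->]]]]]; simpl.
    + rewrite (IHn _ H); reflexivity.
    + rewrite repeat_length; reflexivity.
Qed.

Lemma Lex_cons (A : Type) (mul : A -> A -> A) bot m y b :
  Lex mul bot (S m) (y::b) ->
  (inI mul y /\ Lex mul bot m b) \/ (inC mul y /\ b = repeat bot m).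
Proof. simpl. intros [x [t [E H]]]. injection E as -> ->. exact H. Qed.

Lemma Lex_repeat (A : Type) (mul : A -> A -> A) bot m :
  Lex mul bot m (repeat bot m).
Proof.
  induction m; simpl; [reflexivity|].
  exists bot, (repeat bot m); split; [reflexivity|].
  destruct (classic (inI mul bot)); [left; tauto | right; split; [exact H|reflexivity]].
Qed.

Lemma Lex_tail (A : Type) (mul : A -> A -> A) bot m y b :
  Lex mul bot (S m) (y::b) -> Lex mul bot m b.
Proof.
  intros H; destruct (Lex_cons _ _ _ _ _ _ H) as [[_ H1]|[_ ->]]; [exact H1|apply Lex_repeat].
Qed.

Lemma lexle_refl (A : Type) (le : A -> A -> Prop) :
  (forall a, le a a) -> forall s, lexle le s s.
Proof.
  intros Hr s; induction s as [|x s IH]; [simpl; auto|].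
  destruct s as [|z s]; [simpl; auto|].
  apply lexle_cons; [discriminate|]. right; auto.
Qed.

Lemma rep_least (A : Type) (le : A -> A -> Prop) bot :
  (forall a, le a a) -> is_bottom le bot ->
  forall m s, length s = m -> lexle le (repeat bot m) s.
Proof.
  intros Hr Hb m; induction m as [|m IH]; intros s Hs.
  - destruct s; [simpl; auto|discriminate].
  - destruct s as [|x s]; [discriminate|]. simpl in Hs; injection Hs as Hs.
    destruct m as [|m'].
    + destruct s; [|discriminate]. simpl. apply Hb.
    + simpl repeat. apply lexle_cons; [discriminate|].
      destruct (classic (bot = x)) as [E|E].
      * right; split; [exact E| apply IH; simpl; lia].
      * left; split; [apply Hb|exact E].
Qed.

Lemma mulk_rep (A : Type) (mul : A -> A -> A) bot :
  (forall x, mul bot x = bot) -> forall m c, length c = m ->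
  mulk mul (repeat bot m) c = repeat bot m.
Proof.
  intros Hb m; induction m; intros c Hc; [reflexivity|].
  destruct c as [|z c]; [discriminate|]. simpl in *. unfold mulk in *. simpl.
  rewrite Hb, IHm; auto.
Qed.
Lemma bot_mul (A : Type) le mul res (one bot : A) :
  residuated_pomonoid le mul res one -> is_bottom le bot ->
  forall x, mul bot x = bot.
Proof.
  intros (Hr & Ha & Ht & Hass & Hc & H1 & Hres) Hb x.
  apply Ha; [|apply Hb]. rewrite Hc. apply Hres. apply Hb.
Qed.

Lemma top_ge (A : Type) le mul res (one bot : A) :
  residuated_pomonoid le mul res one -> is_bottom le bot ->
  forall x, le x (res bot bot).
Proof.
  intros RP Hb x. pose proof (bot_mul _ _ _ _ _ _ RP Hb x) as E.
  destruct RP as (Hr & Ha & Ht & Hass & Hc & H1 & Hres).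
  apply Hres. rewrite E. apply Hr.
Qed.

Lemma mono (A : Type) le mul res (one : A) :
  residuated_pomonoid le mul res one ->
  forall y z u, le z u -> le (mul y z) (mul y u).
Proof.
  intros (Hr & Ha & Ht & Hass & Hc & H1 & Hres) y z u H.
  apply Hres. apply Ht with u; [exact H|]. apply Hres. apply Hr.
Qed.

Lemma greatest_exists (A : Type) le mul res (one bot : A) :
  residuated_pomonoid le mul res one -> is_bottom le bot ->
  forall n, exists g, is_greatest_Lex le mul bot n g.
Proof.
  intros RP Hb. pose proof (top_ge _ _ _ _ _ _ RP Hb) as HT.
  pose proof RP as (Hr & Ha & Ht & Hass & Hc & H1 & Hres).
  set (T := res bot bot) in *.
  induction n as [|m [g [Hg Hmax]]].
  - exists []. split; [reflexivity|]. intros s Hs; simpl in Hs; subst; simpl; auto.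
  - destruct (classic (inI mul T)) as [HI|HC].
    + exists (T :: g). split.
      * simpl. exists T, g. split; [reflexivity|left; auto].
      * intros s Hs. destruct s as [|x t]; [apply Lex_len in Hs; discriminate|].
        destruct m as [|m'].
        { pose proof (Lex_tail _ _ _ _ _ _ Hs) as Ht0. simpl in Ht0. subst t.
          pose proof (Lex_len _ _ _ _ _ Hg) as Hl. destruct g; [|discriminate].
          simpl. apply HT. }
        apply lexle_cons.
        { pose proof (Lex_tail _ _ _ _ _ _ Hs) as Ht0. apply Lex_len in Ht0.
          destruct t; [discriminate|discriminate]. }
        destruct (classic (x = T)) as [E|E].
        { right; split; [exact E|]. apply Hmax. eapply Lex_tail; eauto. }
        { left; split; [apply HT|exact E]. }
    + exists (T :: repeat bot m). split.
      * simpl. exists T, (repeat bot m). split; [reflexivity|right; auto].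
      * intros s Hs. destruct s as [|x t]; [apply Lex_len in Hs; discriminate|].
        destruct m as [|m'].
        { pose proof (Lex_tail _ _ _ _ _ _ Hs) as Ht0. simpl in Ht0. subst t.
          simpl. apply HT. }
        apply lexle_cons.
        { pose proof (Lex_tail _ _ _ _ _ _ Hs) as Ht0. apply Lex_len in Ht0.
          destruct t; [discriminate|discriminate]. }
        destruct (classic (x = T)) as [E|E].
        { right; split; [exact E|]. subst x.
          destruct (Lex_cons _ _ _ _ _ _ Hs) as [[HI _]|[_ ->]]; [contradiction|].
          apply lexle_refl; auto. }
        { left; split; [apply HT|exact E]. }
Qed.
Lemma core (A : Type) le mul res (one bot : A) :
  residuated_pomonoid le mul res one -> is_bottom le bot ->
  forall e n a b c top,
  length a = n -> Lex mul bot n b -> Lex mul bot n c -> e < n ->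
  (forall j, j < e -> ~ lt le (mul (res (nth j a bot) (nth j b bot)) (nth j b bot)) (nth j a bot)) ->
  lt le (mul (res (nth e a bot) (nth e b bot)) (nth e b bot)) (nth e a bot) ->
  (forall j, j <= e -> inI mul (res (nth j a bot) (nth j b bot))) ->
  is_greatest_Lex le mul bot (n - S e) top ->
  Lex mul bot n (zipw res (firstn (S e) a) (firstn (S e) b) ++ top) /\
  (lexle le (mulk mul b c) a <-> lexle le c (zipw res (firstn (S e) a) (firstn (S e) b) ++ top)).
Proof.
  intros RP Hb.
  pose proof (bot_mul _ _ _ _ _ _ RP Hb) as Hbm.
  pose proof (mono _ _ _ _ _ RP) as Hmono.
  pose proof RP as (Hr & Ha & Ht & Hass & Hc & H1 & Hres).
  assert (Hle : forall x y, le (mul y (res x y)) x) by (intros; apply Hres; apply Hr).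
  induction e as [|e IH]; intros n a b c top Hla Hlb Hlc Hen Hnd Hd HI [Htop Hmax].
  - destruct n as [|m]; [lia|].
    destruct a as [|x a']; [discriminate|]. simpl in Hla; injection Hla as Hla.
    destruct b as [|y b']; [apply Lex_len in Hlb; discriminate|].
    destruct c as [|z c']; [apply Lex_len in Hlc; discriminate|].
    simpl in Hd. specialize (HI 0 (le_n 0)). simpl in HI.
    simpl in Htop, Hmax. rewrite ?Nat.sub_0_r in Htop, Hmax. cbn [firstn zipw app].
    split.
    { exists (res x y), top. split; [reflexivity|left; auto]. }
    set (u := res x y) in *.
    pose proof (Lex_tail _ _ _ _ _ _ Hlc) as Hc'.
    pose proof (Lex_len _ _ _ _ _ Hc') as Hlc'.
    pose proof (Lex_len _ _ _ _ _ Htop) as Hltop.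
    pose proof (Lex_len _ _ _ _ _ (Lex_tail _ _ _ _ _ _ Hlb)) as Hlb'.
    destruct m as [|m'].
    + destruct a', b', c', top; try discriminate. unfold mulk; simpl.
      split; intro H; apply Hres; exact H.
    + assert (Hbc : mulk mul b' c' <> []).
      { destruct b', c'; try discriminate. all: unfold mulk; simpl; discriminate. }
      unfold mulk; cbn [zipw]; fold (mulk mul b' c').
      rewrite lexle_cons by exact Hbc.
      rewrite lexle_cons by (destruct c'; [discriminate|discriminate]).
      split.
      * intros H. assert (Hz : le z u).
        { apply Hres. destruct H as [[H _]|[-> _]]; [exact H|apply Hr]. }
        destruct (classic (z = u)) as [E|E].
        { right; split; [exact E|]. apply Hmax. exact Hc'. }
        { left; split; assumption. }
      * intros H. assert (Hz : le z u).
        { destruct H as [[H _]|[-> _]]; [exact H|apply Hr]. }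
        left; split; [apply Hres; exact Hz|].
        intro E. destruct Hd as [Hd1 Hd2]. apply Hd2. apply Ha; [exact Hd1|].
        rewrite <- E at 1. rewrite (Hc u y). apply Hmono. exact Hz.
  - destruct n as [|m]; [lia|].
    destruct a as [|x a']; [discriminate|]. simpl in Hla; injection Hla as Hla.
    destruct b as [|y b']; [apply Lex_len in Hlb; discriminate|].
    destruct c as [|z c']; [apply Lex_len in Hlc; discriminate|].
    pose proof (Lex_tail _ _ _ _ _ _ Hlc) as Hc'.
    pose proof (Lex_tail _ _ _ _ _ _ Hlb) as Hb'.
    pose proof (Lex_len _ _ _ _ _ Hc') as Hlc'.
    pose proof (Lex_len _ _ _ _ _ Hb') as Hlb'.
    assert (Heq : mul (res x y) y = x).
    { apply NNPP. intro N. apply (Hnd 0 ltac:(lia)). simpl. split; [|exact N].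
      rewrite Hc. apply Hle. }
    assert (HI0 : inI mul (res x y)) by exact (HI 0 ltac:(lia)).
    destruct (IH m a' b' c' top Hla Hb' Hc' ltac:(lia)
       (fun j Hj => Hnd (S j) ltac:(lia)) Hd (fun j Hj => HI (S j) ltac:(lia))
       ltac:(split; [exact Htop|exact Hmax])) as [HL Hiff].
    cbn [firstn zipw app].
    split.
    { exists (res x y), (zipw res (firstn (S e) a') (firstn (S e) b') ++ top).
      split; [reflexivity|left; auto]. }
    set (r' := zipw res (firstn (S e) a') (firstn (S e) b') ++ top) in *.
    set (u := res x y) in *.
    assert (Hm : m <> 0) by lia.
    assert (Hbc : mulk mul b' c' <> []).
    { destruct b', c'; simpl in *; try lia. all: unfold mulk; simpl; discriminate. }
    unfold mulk; cbn [zipw]; fold (mulk mul b' c').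
    rewrite lexle_cons by exact Hbc.
    rewrite lexle_cons by (destruct c'; simpl in *; [lia|discriminate]).
    assert (Hyu : mul y u = x) by (rewrite Hc; exact Heq).
    split.
    + intros H. assert (Hz : le z u).
      { apply Hres. destruct H as [[H _]|[-> _]]; [exact H|apply Hr]. }
      destruct (classic (z = u)) as [E|E].
      * right; split; [exact E|]. apply Hiff.
        destruct H as [[_ H]|[_ H]]; [|exact H]. subst z. contradiction.
      * left; split; assumption.
    + intros [[Hz Hne]|[-> H]].
      * destruct (classic (mul y z = x)) as [E|E].
        { right; split; [exact E|].
          destruct (Lex_cons _ _ _ _ _ _ Hlb) as [[HIy _]|[_ Hrep]].
          - exfalso. apply Hne. apply HIy. rewrite (Hc z y), (Hc u y), E, Hyu. reflexivity.
          - rewrite Hrep. rewrite (mulk_rep _ _ _ Hbm m c' Hlc').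
            apply rep_least; auto. }
        { left; split; [apply Hres; exact Hz|exact E]. }
      * right; split; [exact Hyu|]. apply Hiff; exact H.
Qed.

Theorem proposition3 (A : Type) (le : A -> A -> Prop) (mul res : A -> A -> A)
  (one bot : A) :
  residuated_pomonoid le mul res one ->
  is_bottom le bot ->
  forall (k : nat) (a b : list A) (d g : nat),
  1 <= k ->
  Lex mul bot k a -> Lex mul bot k b ->
  is_delta le mul res bot k a b d ->
  is_gamma mul res bot k a b g ->
  d < g ->
  (exists top, is_greatest_Lex le mul bot (k - d) top) /\
  (forall top, is_greatest_Lex le mul bot (k - d) top ->
     let r := zipw res (firstn d a) (firstn d b) ++ top in
     Lex mul bot k r /\
     (forall c, Lex mul bot k c ->
        (lexle le (mulk mul b c) a <-> lexle le c r))).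
Proof.
  intros RP Hb k a b d g Hk Ha Hbl [Hd1 [Hd2 Hd3]] [Hg1 [Hg2 Hg3]] Hdg.
  split; [apply (greatest_exists _ _ _ _ _ _ RP Hb)|].
  intros top Htop r.
  destruct d as [|e]; [lia|].
  assert (Hek : e < k) by lia.
  specialize (Hd3 ltac:(lia)). replace (S e - 1) with e in Hd3 by lia.
  assert (Hnd : forall j, j < e -> ~ lt le (mul (res (nth j a bot) (nth j b bot)) (nth j b bot)) (nth j a bot)).
  { intros j Hj. specialize (Hd2 (S j) ltac:(lia)). replace (S j - 1) with j in Hd2 by lia. exact Hd2. }
  assert (HI : forall j, j <= e -> inI mul (res (nth j a bot) (nth j b bot))).
  { intros j Hj. specialize (Hg2 (S j) ltac:(lia)). replace (S j - 1) with j in Hg2 by lia.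
    apply NNPP. exact Hg2. }
  split.
  - destruct (core _ _ _ _ _ _ RP Hb e k a b b top (Lex_len _ _ _ _ _ Ha) Hbl Hbl Hek Hnd Hd3 HI Htop). exact H.
  - intros c Hc.
    destruct (core _ _ _ _ _ _ RP Hb e k a b c top (Lex_len _ _ _ _ _ Ha) Hbl Hc Hek Hnd Hd3 HI Htop). exact H0.
Qed.
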